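(* Let $D \in \mathbb{R}^{m \times n}$, let $Q \in \mathbb{Z}^{m\times n}$ be such that for each $j$ the $j$th column of $Q$ stores the sorting of the $j$th column of $D$, and let $(a_1,\ldots,a_p)$ be a sequence with $a_k \in \{0,\ldots,n-1\}$ for all $k$. Then QuickLexSort$(D,Q,(a_1,\ldots,a_p))$ returns the ranking vector of the lexicographical sorting of the sub-matrix of $D$ determined by the sequence of columns $(a_1,\ldots,a_p)$.
   Context: Rows of $D$ are indexed by $\{0,\ldots,m-1\}$, columns by $\{0,\ldots,n-1\}$. ''The $j$th column of $Q$ stores the sorting of the $j$th column of $D$'' means $(Q_{0j},\ldots,Q_{m-1,j})$ is a permutation of $\{0,\ldots,m-1\}$ with $D_{Q_{0j},j} \le \cdots \le D_{Q_{m-1,j},j}$. For a sequence of columns $(b_1,\ldots,b_q)$, the sub-matrix determined by it has row $r$ equal to $(D_{r b_1},\ldots,D_{r b_q})$; rows are compared lexicographically ($v <_{\mathrm{lex}} w$ iff $v_1<w_1$, or $v_1=w_1,\ldots,v_k=w_k$ and $v_{k+1}<w_{k+1}$ for some $k$). The ranking vector of this ordering is the unique $L \in \{0,\ldots,m-1\}^m$ such that equal rows get equal values, a lexicographically smaller row gets a strictly smaller value, and $\sum_r L_r$ is minimal (equivalently, $L_r$ is the number of distinct rows strictly lexicographically smaller than row $r$). QuickLexSortRefine$(D,Q,i,L)$: initialize integer arrays $\mathrm{IDval},\mathrm{IDvalInit},\mathrm{subID},\mathrm{newCount},\mathrm{numNewID}$ of length $m$ to zero. For $j=0,\ldots,m-1$: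 let $r := Q[j,i]$, $\ell := L[r]$; if $\mathrm{IDvalInit}[\ell]=0$, set $\mathrm{IDvalInit}[\ell]:=1$, $\mathrm{IDval}[\ell]:=D[r,i]$; otherwise if $\mathrm{IDval}[\ell]\neq D[r,i]$, set $\mathrm{IDval}[\ell]:=D[r,i]$ and increment $\mathrm{newCount}[\ell]$; then set $\mathrm{subID}[r]:=\mathrm{newCount}[\ell]$. Set $\mathrm{numNewID}[m-1]:=\sum_{j=0}^{m-2}\mathrm{newCount}[j]$ and for $j=m-2,\ldots,1$, $\mathrm{numNewID}[j]:=\mathrm{numNewID}[j+1]-\mathrm{newCount}[j]$ ($\mathrm{numNewID}[0]=0$). Return $L'$ with $L'[j]:=L[j]+\mathrm{numNewID}[L[j]]+\mathrm{subID}[j]$ for $j=0,\ldots,m-1$. QuickLexSort$(D,Q,(a_1,\ldots,a_p))$: set $L'$ to the zero vector of length $m$; for $k=1,\ldots,p$ in order, set $L' := $ QuickLexSortRefine$(D,Q,a_k,L')$; return $L'$. *)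

(* Defs.v *)
From HB Require Import structures.
From mathcomp Require Import all_boot all_order all_algebra.
From mathcomp Require Import reals.
Set Implicit Arguments. Unset Strict Implicit. Unset Printing Implicit Defensive.
Import Order.TTheory GRing.Theory Num.Theory.
Local Open Scope ring_scope.

Section QLS.
Variables (R : realType) (m n : nat).

(* Entry D[r,i] with a natural row index r (0 if r is out of range, never
   used under the hypotheses). *)
Definition Dat (D : 'M[R]_(m, n)) (r : nat) (i : 'I_n) : R :=
  if (insub r : option 'I_m) is Some r' then D r' i else 0.

(* Entry Q[j,i] of the integer matrix Q, with a natural row index j,
   read as a natural number (its entries are in {0..m-1} by hypothesis). *)
Definition Qat (Q : 'M[int]_(m, n)) (j : nat) (i : 'I_n) : nat :=
  if (insub j : option 'I_m) is Some j' then absz (Q j' i) else 0%N.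

(* State: (IDval, IDvalInit, subID, newCount) *)
Definition refine_step (D : 'M[R]_(m, n)) (Q : 'M[int]_(m, n)) (i : 'I_n)
    (L : seq nat) (st : seq R * seq nat * seq nat * seq nat) (j : nat)
    : seq R * seq nat * seq nat * seq nat :=
  let: (idv, init, sub, cnt) := st in
  let r := Qat Q j i in
  let l := nth 0%N L r in
  let d := Dat D r i in
  if nth 0%N init l == 0%N then
    (set_nth 0 idv l d, set_nth 0%N init l 1%N, set_nth 0%N sub r (nth 0%N cnt l), cnt)
  else if nth 0 idv l != d then
    let cnt' := set_nth 0%N cnt l (nth 0%N cnt l).+1 in
    (set_nth 0 idv l d, init, set_nth 0%N sub r (nth 0%N cnt' l), cnt')
  else (idv, init, set_nth 0%N sub r (nth 0%N cnt l), cnt).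

Definition QuickLexSortRefine (D : 'M[R]_(m, n)) (Q : 'M[int]_(m, n))
    (i : 'I_n) (L : seq nat) : seq nat :=
  let: (_, _, sub, cnt) :=
    foldl (refine_step D Q i L) (nseq m 0, nseq m 0%N, nseq m 0%N, nseq m 0%N)
          (iota 0 m) in
  let nn0 := set_nth 0%N (nseq m 0%N) (m - 1)
               (\sum_(0 <= j < m - 1) nth 0%N cnt j)%N in
  let nn := foldl (fun nn j => set_nth 0%N nn j (nth 0%N nn j.+1 - nth 0%N cnt j)%N)
                  nn0 (rev (iota 1 (m - 2))) in
  [seq (nth 0%N L j + nth 0%N nn (nth 0%N L j) + nth 0%N sub j)%N | j <- iota 0 m].

Definition QuickLexSort (D : 'M[R]_(m, n)) (Q : 'M[int]_(m, n))
    (a : seq 'I_n) : seq nat :=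
  foldl (fun L i => QuickLexSortRefine D Q i L) (nseq m 0%N) a.

Fixpoint lexlt (v w : seq R) : bool :=
  match v, w with
  | x :: v', y :: w' => (x < y) || ((x == y) && lexlt v' w')
  | _, _ => false
  end.

Definition subrow (D : 'M[R]_(m, n)) (a : seq 'I_n) (r : 'I_m) : seq R :=
  [seq D r b | b <- a].

Definition ranking_vector (D : 'M[R]_(m, n)) (a : seq 'I_n) : seq nat :=
  [seq size (undup [seq subrow D a r' | r' <- enum 'I_m &
                      lexlt (subrow D a r') (subrow D a r)])
  | r <- enum 'I_m].

Definition sorting_matrix (D : 'M[R]_(m, n)) (Q : 'M[int]_(m, n)) : Prop :=
  forall j : 'I_n,
    perm_eq [seq Q k j | k <- enum 'I_m] [seq (k%:Z)%R | k <- iota 0 m] /\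
    sorted <=%R [seq Dat D (Qat Q k j) j | k <- iota 0 m].
End QLS.

(* Main.v *)
Require Import Defs.
From HB Require Import structures.
From mathcomp Require Import all_boot all_order all_algebra.
From mathcomp Require Import reals.
Set Implicit Arguments. Unset Strict Implicit. Unset Printing Implicit Defensive.
Import Order.TTheory GRing.Theory Num.Theory.

Lemma sz_undup_eqi (T : eqType) (s1 s2 : seq T) :
  s1 =i s2 -> size (undup s1) = size (undup s2).
Proof.
move=> E; apply: perm_size; apply: uniq_perm; rewrite ?undup_uniq //.
by move=> x; rewrite !mem_undup E.
Qed.

Lemma sz_undup_cons (T : eqType) (s : seq T) x :
  size (undup (x :: s)) = if x \in s then size (undup s) else (size (undup s)).+1.
Proof. by rewrite /=; case: ifP. Qed.

Lemma sz_undup_rcons (T : eqType) (s : seq T) x :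
  size (undup (rcons s x)) = if x \in s then size (undup s) else (size (undup s)).+1.
Proof.
rewrite -sz_undup_cons; apply: sz_undup_eqi => y.
by rewrite mem_rcons.
Qed.

Lemma sz_undup_map_eqrel (T1 T2 T3 : eqType) (f : T1 -> T2) (g : T1 -> T3) s :
  {in s &, forall x y, (f x == f y) = (g x == g y)} ->
  size (undup (map f s)) = size (undup (map g s)).
Proof.
elim: s => [//|x s IH] H /=.
have H' : {in s &, forall x y, (f x == f y) = (g x == g y)}.
  by move=> y z ys zs; apply: H; rewrite inE ?ys ?zs orbT.
have -> : (f x \in map f s) = (g x \in map g s).
  apply/mapP/mapP => [][y ys e]; exists y => //.
    by apply/eqP; rewrite -H ?inE ?ys ?eqxx ?orbT // e.
  by apply/eqP; rewrite H ?inE ?ys ?eqxx ?orbT // e.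
by case: ifP => _ //=; rewrite IH.
Qed.

Section Lex.
Variable R : realType.
Local Open Scope ring_scope.

Lemma lexlt_irr (v : seq R) : lexlt v v = false.
Proof. by elim: v => //= x v ->; rewrite ltxx andbF. Qed.

Lemma lexlt_trans (u v w : seq R) : lexlt u v -> lexlt v w -> lexlt u w.
Proof.
elim: u v w => [|x u IH] [|y v] [|z w] //=.
case/orP=> [xy|/andP[/eqP <- uv]]; case/orP=> [yz|/andP[/eqP <- vw]].
- by rewrite (lt_trans xy yz).
- by rewrite xy.
- by rewrite yz.
- by rewrite eqxx (IH _ _ uv vw) orbT.
Qed.

Lemma lexlt_total (u v : seq R) : size u = size v -> u != v -> lexlt u v || lexlt v u.
Proof.
elim: u v => [|x u IH] [|y v] //= [] /IH {}IH.
rewrite eqseq_cons negb_and.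
case: (ltgtP x y) => //= xy; rewrite ?eqxx /= => H.
Qed.

Lemma lexlt_rcons (u v : seq R) x y : size u = size v ->
  lexlt (rcons u x) (rcons v y) = lexlt u v || ((u == v) && (x < y)).
Proof.
elim: u v => [|a u IH] [|b v] //=; first by rewrite ?orbF ?andbF ?eqxx /=; case: (x < y).
case=> /IH ->; rewrite eqseq_cons.
case: (ltgtP a b) => //= ab.
Qed.
End Lex.

Lemma count_lt_sum (T : Type) (u : seq (nat * T)) l :
  count (fun p => p.1 < l) u = \sum_(0 <= j < l) count (fun p => p.1 == j) u.
Proof.
elim: l => [|l IH]; first by rewrite big_geq // (eq_count (a2 := pred0)) ?count_pred0.
rewrite big_nat_recr //= -IH.
have := count_predUI (fun p : nat * T => p.1 < l) (fun p => p.1 == l) u.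
rewrite (eq_count (a1 := predI _ _) (a2 := pred0)); last first.
  by move=> p /=; case: ltngtP.
rewrite count_pred0 addn0 => <-; apply: eq_count => p /=.
by rewrite ltnS leq_eqVlt orbC.
Qed.

Lemma sz_undup_snd (T : eqType) (P : seq (nat * T)) (C : pred (nat * T)) j :
  (forall p, C p -> p.1 = j) ->
  size (undup [seq p.2 | p <- P & C p]) = count C (undup P).
Proof.
move=> HC; rewrite -size_filter filter_undup.
rewrite -[in RHS](map_id [seq p <- P | C p]).
apply: sz_undup_map_eqrel => p q; rewrite !mem_filter => /andP[Cp _] /andP[Cq _].
by case: p q Cp Cq => [a x] [b y] /= /HC /= -> /HC /= ->; rewrite xpair_eqE eqxx.
Qed.

Lemma count_pairs (T : eqType) (P : seq (nat * T)) (l : nat) (B : pred T) :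
  size (undup [seq p <- P | (p.1 < l) || ((p.1 == l) && B p.2)]) =
  \sum_(0 <= j < l) size (undup [seq p.2 | p <- P & p.1 == j])
  + size (undup [seq p.2 | p <- P & (p.1 == l) && B p.2]).
Proof.
rewrite -filter_undup size_filter.
rewrite (@sz_undup_snd _ _ _ l); last by move=> p /andP[/eqP].
rewrite (eq_bigr (fun j => count (fun p => p.1 == j) (undup P))); last first.
  by move=> j _; rewrite (@sz_undup_snd _ _ _ j) // => p /eqP.
rewrite -count_lt_sum.
have := count_predUI (fun p : nat * T => p.1 < l) (fun p => (p.1 == l) && B p.2) (undup P).
rewrite (eq_count (a1 := predI _ _) (a2 := pred0)); last first.
  by move=> p /=; case: ltngtP.
by rewrite count_pred0 addn0.
Qed.

Section Algo.
Variables (R : realType) (m n : nat) (D : 'M[R]_(m, n)) (Q : 'M[int]_(m, n)).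
Variables (i : 'I_n) (L : seq nat).

Local Notation lr r := (nth 0%N L r).
Local Notation d r := (Dat D r i).

Definition cls (l : nat) (s : seq nat) := [seq r <- s | lr r == l].

Definition Inv (s : seq nat) (st : seq R * seq nat * seq nat * seq nat) : Prop :=
  let: (idv, init, sub, cnt) := st in
  [/\ forall l, nth 0%N init l = has (fun r => lr r == l) s,
      forall l, has (fun r => lr r == l) s ->
         nth 0%R idv l \in map (fun r => d r) (cls l s) /\
         (forall x, x \in map (fun r => d r) (cls l s) -> (x <= nth 0%R idv l)%R),
      forall l, nth 0%N cnt l = (size (undup (map (fun r => d r) (cls l s)))).-1 &
      forall r, r \in s -> nth 0%N sub r =
         (size (undup (map (fun r => d r) [seq r' <- cls (lr r) s | (d r' <= d r)%R]))).-1].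

Lemma cls_rcons l s r : cls l (rcons s r) = if lr r == l then rcons (cls l s) r else cls l s.
Proof. by rewrite /cls filter_rcons. Qed.

Lemma Inv_post s r idv init sub cnt idv' init' sub' cnt' :
  Inv s (idv, init, sub, cnt) -> r \notin s -> (forall x, x \in s -> (d x <= d r)%R) ->
  (forall l', l' != lr r -> [/\ nth 0%N init' l' = nth 0%N init l',
                               nth 0%R idv' l' = nth 0%R idv l' &
                               nth 0%N cnt' l' = nth 0%N cnt l']) ->
  nth 0%N init' (lr r) = 1%N -> nth 0%R idv' (lr r) = d r ->
  nth 0%N cnt' (lr r) = (size (undup (rcons (map (fun r => d r) (cls (lr r) s)) (d r)))).-1 ->
  nth 0%N sub' r = nth 0%N cnt' (lr r) ->
  (forall r', r' != r -> nth 0%N sub' r' = nth 0%N sub r') ->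
  Inv (rcons s r) (idv', init', sub', cnt').
Proof.
move=> [H1 H2 H3 H4] rs hle Hoth Hinit Hidv Hcnt Hsub Hsub'.
split.
- move=> l; rewrite has_rcons /=.
  case: (eqVneq l (lr r)) => [->|ne]; first by rewrite Hinit ?eqxx.
  by have [-> _ _] := Hoth _ ne; rewrite H1.
- move=> l; rewrite has_rcons cls_rcons /=.
  case: (eqVneq l (lr r)) => [->|ne].
    rewrite ?eqxx Hidv map_rcons mem_rcons inE eqxx; split => // x.
    rewrite mem_rcons inE => /orP[/eqP -> //|/mapP[y]].
    by rewrite mem_filter => /andP[_ ys] ->; apply: hle.
  have [_ -> _] := Hoth _ ne; exact: H2.
- move=> l; rewrite cls_rcons.
  case: (eqVneq l (lr r)) => [->|ne]; first by rewrite ?eqxx Hcnt map_rcons.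
  by have [_ _ ->] := Hoth _ ne.
- move=> r'; rewrite mem_rcons inE; case: (eqVneq r' r) => [-> _|ne /= r's].
    rewrite Hsub Hcnt cls_rcons eqxx filter_rcons lexx map_rcons.
    congr (size (undup (rcons _ _))).-1; congr map.
    apply/esym/all_filterP/allP => x; rewrite mem_filter => /andP[_ xs]; exact: hle.
  rewrite Hsub' // H4 // cls_rcons.
  case: eqP => // E; rewrite filter_rcons.
  case: ifP => // le; rewrite map_rcons sz_undup_rcons ifT //.
  apply/mapP; exists r'; first by rewrite mem_filter lexx /= /cls mem_filter eqxx r's.
  by apply/eqP; rewrite eq_le le hle.
Qed.

Lemma Inv_step s st j : Inv s st -> Qat Q j i \notin s ->
  (forall x, x \in s -> (d x <= d (Qat Q j i))%R) ->
  Inv (rcons s (Qat Q j i)) (refine_step D Q i L st j).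
Proof.
case: st => [[[idv init] sub] cnt] Hinv rs hle.
rewrite /refine_step.
set r := Qat Q j i.
set l := lr r.
have Hinv' := Hinv; case: Hinv' => [H1 H2 H3 H4].
case: ifP => [/eqP i0|/negbT i0].
  have hn : has (fun r => lr r == l) s = false by move: i0; rewrite H1; case: has.
  have cl0 : cls l s = [::] by apply/eqP; rewrite /cls -[_ == _]negbK -has_filter hn.
  apply: (Inv_post Hinv) => //.
  - move=> l' ne; rewrite !nth_set_nth /= (negbTE ne); split=> //.
  - by rewrite nth_set_nth /= eqxx.
  - by rewrite nth_set_nth /= eqxx.
  - by rewrite H3 cl0.
  - by rewrite nth_set_nth /= eqxx.
  - by move=> r' ne; rewrite nth_set_nth /= (negbTE ne).
have hn : has (fun r => lr r == l) s by move: i0; rewrite H1; case: has.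
have [idvin idvmax] := H2 _ hn.
have szpos : (0 < size (undup [seq d r0 | r0 <- cls l s]))%N.
  have : nth 0%R idv l \in undup [seq d r0 | r0 <- cls l s] by rewrite mem_undup.
  by case: (undup _).
case: ifP => [ne|/negbFE/eqP eqd].
  have drn : d r \notin map (fun r => d r) (cls l s).
    apply/negP => /idvmax le.
    have /idvmax le2 := idvin.
    have : nth 0%R idv l \in map (fun r => d r) (cls l s) by [].
    move=> /mapP[y]; rewrite mem_filter => /andP[_ ys] ey.
    by move: ne; rewrite eq_le le ey hle.
  apply: (Inv_post Hinv) => //.
  - move=> l' ne'; rewrite !nth_set_nth /= (negbTE ne'); split=> //.
  - by rewrite H1 hn.
  - by rewrite nth_set_nth /= eqxx.
  - by rewrite nth_set_nth /= eqxx sz_undup_rcons (negbTE drn) H3 prednK.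
  - by rewrite nth_set_nth /= eqxx.
  - by move=> r' ne'; rewrite nth_set_nth /= (negbTE ne').
apply: (Inv_post Hinv) => //.
- by rewrite H1 hn.
- by rewrite sz_undup_rcons -eqd idvin H3.
- by rewrite nth_set_nth /= eqxx.
- by move=> r' ne'; rewrite nth_set_nth /= (negbTE ne').
Qed.

Definition st0 : seq R * seq nat * seq nat * seq nat :=
  (nseq m 0%R, nseq m 0%N, nseq m 0%N, nseq m 0%N).

Lemma Inv0 : Inv [::] st0.
Proof.
split => //= l; rewrite ?nth_nseq; case: ifP => //.
Qed.

Hypothesis Hu : uniq [seq Qat Q k i | k <- iota 0 m].
Hypothesis Hs : sorted <=%R [seq Dat D (Qat Q k i) i | k <- iota 0 m].

Lemma Inv_loop j : (j <= m)%N ->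
  Inv [seq Qat Q k i | k <- iota 0 j] (foldl (refine_step D Q i L) st0 (iota 0 j)).
Proof.
elim: j => [_|j IH jm]; first exact: Inv0.
rewrite -addn1 iotaD add0n foldl_cat map_cat cats1 /=.
apply: Inv_step; first exact: IH (ltnW jm).
- apply/mapP => [][k]; rewrite mem_iota add0n => kj /eqP.
  have nq : forall t, (t < m)%N -> nth 0%N [seq Qat Q k i | k <- iota 0 m] t = Qat Q t i.
    by move=> t tm; rewrite (nth_map 0%N) ?size_iota // nth_iota.
  rewrite -!nq ?(ltn_trans kj) // nth_uniq ?size_map ?size_iota ?(ltn_trans kj) // => /eqP jk.
  by move: kj; rewrite jk ltnn.
- move=> x /mapP[k]; rewrite mem_iota add0n => kj ->.
  have := sorted_leq_nth le_trans lexx 0%R Hs.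
  move=> /(_ k j); rewrite !inE !size_map !size_iota (ltn_trans kj) // jm.
  move=> /(_ isT isT (ltnW kj)).
  by rewrite !(nth_map 0%N) ?size_iota ?(ltn_trans kj) // !nth_iota ?(ltn_trans kj).
Qed.
End Algo.

Section NN.
Variables (m : nat) (c : seq nat).
Let S l := (\sum_(0 <= j < l) nth 0 c j)%N.
Let F := (fun nn j => set_nth 0 nn j (nth 0 nn j.+1 - nth 0 c j))%N.
Let nn0 := set_nth 0%N (nseq m 0%N) (m - 1) (S (m - 1)).

Lemma nn_gen cc k : k + cc = m - 1 -> forall l, l <= m - 1 ->
  nth 0 (foldr (fun x z => F z x) nn0 (iota k cc)) l = if k <= l then S l else 0.
Proof.
elim: cc k => [|cc IH] k.
  rewrite addn0 => -> l lm /=; rewrite /nn0 nth_set_nth /=.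
  case: eqP => [->|ne]; first by rewrite leqnn.
  rewrite nth_nseq if_same; case: ifP => // h.
  by case: ne; apply/eqP; rewrite eqn_leq h lm.
move=> e l lm /=; rewrite {1}/F nth_set_nth /=.
have e' : k.+1 + cc = m - 1 by rewrite addSnnS.
case: eqP => [->|ne].
  rewrite IH // ?leqnn; last by rewrite -e' leq_addr.
  by rewrite /S big_nat_recr //= addnK ?leqnn.
rewrite IH //; case: (ltngtP k l) => //.
  by move=> /eqP; rewrite eq_sym => /eqP.
Qed.

Lemma nn_spec l : 0 < m -> l <= m - 1 ->
  nth 0 (foldl F nn0 (rev (iota 1 (m - 2)))) l = S l.
Proof.
move=> m0 lm; rewrite foldl_rev.
have [m1|m2] : m = 1 \/ 1 < m by case: (ltngtP m 1) m0 => // h _; [right|left].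
  have l0 : l = 0 by move: lm; rewrite m1; case: l.
  have -> : iota 1 (m - 2) = iota 0 0 by rewrite m1.
  by rewrite (nn_gen (k := 0)) ?m1 //= l0.
rewrite (nn_gen (k := 1)) //; last by rewrite add1n -subSn // subn2 subn1.
by case: l lm => // _; rewrite /S big_geq.
Qed.
End NN.

Section R6.
Variables (R : realType) (m n : nat) (D : 'M[R]_(m, n)) (Q : 'M[int]_(m, n)).
Variables (i : 'I_n) (L : seq nat).
Hypothesis Hp : perm_eq [seq Qat Q k i | k <- iota 0 m] (iota 0 m).
Hypothesis Hs : sorted <=%R [seq Dat D (Qat Q k i) i | k <- iota 0 m].
Local Notation lr r := (nth 0%N L r).
Local Notation d r := (Dat D r i).
Local Notation ord := [seq Qat Q k i | k <- iota 0 m].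

Lemma size_refine : size (QuickLexSortRefine D Q i L) = m.
Proof.
rewrite /QuickLexSortRefine.
by case: foldl => [[[? ?] ?] ?]; rewrite size_map size_iota.
Qed.

Lemma refine_nth r : (r < m)%N -> (lr r < m)%N ->
  nth 0%N (QuickLexSortRefine D Q i L) r =
  (lr r + \sum_(0 <= j < lr r) (size (undup (map (fun r => d r) (cls L j ord)))).-1
   + (size (undup (map (fun r => d r) [seq r' <- cls L (lr r) ord | (d r' <= d r)%R]))).-1)%N.
Proof.
move=> rm lm.
have Hu : uniq ord by rewrite (perm_uniq Hp) iota_uniq.
have := Inv_loop L Hu Hs (leqnn m).
rewrite /QuickLexSortRefine.
case: foldl => [[[idv init] sub] cnt] [_ _ H3 H4].
rewrite (nth_map 0%N) ?size_iota // nth_iota // add0n.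
rewrite nn_spec ?(leq_ltn_trans _ lm) //; last by rewrite leq_subRL ?add1n // (leq_ltn_trans _ lm).
rewrite H4; last first.
  by rewrite (perm_mem Hp) mem_iota.
congr (_ + _ + _)%N; apply: eq_bigr => j _; exact: H3.
Qed.
End R6.

Section Spec.
Variables (R : realType) (m n : nat) (D : 'M[R]_(m, n)) (a : seq 'I_n).
Local Notation k r := (subrow D a r).

Definition rankK (v : seq R) := size (undup [seq k r' | r' <- enum 'I_m & lexlt (k r') v]).
Definition rkf (r : 'I_m) := rankK (k r).

Lemma nth_rank (r : 'I_m) : nth 0%N (ranking_vector D a) r = rkf r.
Proof. by rewrite /ranking_vector (nth_map r) ?size_enum_ord // nth_ord_enum. Qed.

Lemma size_rank : size (ranking_vector D a) = m.
Proof. by rewrite size_map size_enum_ord. Qed.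

Lemma size_k (r : 'I_m) : size (k r) = size a.
Proof. by rewrite size_map. Qed.

Lemma rk_mono r1 r2 : lexlt (k r1) (k r2) -> (rkf r1 < rkf r2)%N.
Proof.
move=> lt12; rewrite /rkf /rankK.
set A := undup _; set B := undup _.
have sub : {subset A <= B}.
  move=> x; rewrite !mem_undup => /mapP[y]; rewrite mem_filter => /andP[ly ye] ->.
  by apply/mapP; exists y => //; rewrite mem_filter (lexlt_trans ly lt12).
have inB : k r1 \in B by rewrite mem_undup; apply/mapP; exists r1; rewrite // mem_filter lt12 mem_enum.
have ninA : k r1 \notin A.
  by rewrite mem_undup; apply/mapP => [][y]; rewrite mem_filter => /andP[ly _] e; move: ly; rewrite -e lexlt_irr.
rewrite ltnNge; apply/negP => le.
have [_ E] := uniq_min_size (undup_uniq _) sub le.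
by move: ninA; rewrite E inB.
Qed.

Lemma rk_lt r1 r2 : (rkf r1 < rkf r2)%N = lexlt (k r1) (k r2).
Proof.
apply/idP/idP => [lt|]; last exact: rk_mono.
case: (eqVneq (k r1) (k r2)) => [e|ne]; first by move: lt; rewrite /rkf e ltnn.
case/orP: (lexlt_total (etrans (size_k r1) (esym (size_k r2))) ne) => // /rk_mono.
by rewrite ltnNge (ltnW lt).
Qed.

Lemma rk_eq r1 r2 : (rkf r1 == rkf r2) = (k r1 == k r2).
Proof.
case: (eqVneq (k r1) (k r2)) => [e|ne]; first by rewrite /rkf e eqxx.
case/orP: (lexlt_total (etrans (size_k r1) (esym (size_k r2))) ne) => /rk_mono h.
  by rewrite ltn_eqF.
by rewrite eq_sym ltn_eqF.
Qed.

Lemma rk_bound r : (rkf r < m)%N.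
Proof.
rewrite /rkf /rankK (leq_ltn_trans (size_undup _)) // size_map size_filter.
have sz : size (enum 'I_m) = m by exact: size_enum_ord.
rewrite -[X in (_ < X)%N]sz -(count_predC (fun r' => lexlt (k r') (k r))) -addn1 leq_add2l.
rewrite -has_count; apply/hasP; exists r; rewrite ?mem_enum //=.
by rewrite lexlt_irr.
Qed.

Lemma rk_dense r j : (j < rkf r)%N -> exists r', rkf r' = j.
Proof.
move=> jr.
set U := undup [seq k r' | r' <- enum 'I_m & lexlt (k r') (k r)].
have kU : forall u, u \in U -> exists2 r', u = k r' & lexlt (k r') (k r).
  by move=> u; rewrite mem_undup => /mapP[y]; rewrite mem_filter => /andP[ly _] ->; exists y.
have uS : uniq (map rankK U).
  rewrite map_inj_in_uniq ?undup_uniq // => u v /kU[r1 -> _] /kU[r2 -> _] e.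
  by apply/eqP; rewrite -rk_eq; apply/eqP.
have sS : {subset map rankK U <= iota 0 (rkf r)}.
  move=> x /mapP[u /kU[r1 -> l1] ->]; rewrite mem_iota add0n.
  exact: rk_mono.
have [_ E] := uniq_min_size uS sS (eq_leq (etrans (size_iota _ _) (esym (size_map _ _)))) .
have : j \in iota 0 (rkf r) by rewrite mem_iota.
by rewrite -E => /mapP[u /kU[r1 -> _] ->]; exists r1.
Qed.
End Spec.

Section Fin.
Variables (R : realType) (m n : nat) (D : 'M[R]_(m, n)) (a : seq 'I_n) (i : 'I_n).
Local Notation rk := (rkf D a).

Lemma subrow_rcons (r : 'I_m) : subrow D (rcons a i) r = rcons (subrow D a r) (D r i).
Proof. by rewrite /subrow map_rcons. Qed.

Lemma rk_rcons (ro : 'I_m) : rkf D (rcons a i) ro =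
  size (undup [seq p <- [seq (rk r', D r' i) | r' <- enum 'I_m] |
     (p.1 < rk ro)%N || (p.1 == rk ro) && (p.2 < D ro i)%R]).
Proof.
rewrite {1}/rkf /rankK.
rewrite (@sz_undup_map_eqrel _ _ _ _ (fun r' => (rk r', D r' i))); last first.
  by move=> x y _ _; rewrite !subrow_rcons eqseq_rcons xpair_eqE rk_eq.
rewrite [in RHS]filter_map; congr (size (undup (map _ _))); apply: eq_filter => x /=.
by rewrite !subrow_rcons lexlt_rcons ?size_k // rk_lt rk_eq.
Qed.

Lemma final_eq (ro : 'I_m) :
  (rk ro + \sum_(0 <= j < rk ro) (size (undup [seq D r' i | r' <- enum 'I_m & rk r' == j])).-1
   + (size (undup [seq D r' i | r' <- enum 'I_m & (rk r' == rk ro) && (D r' i <= D ro i)%R])).-1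
  = rkf D (rcons a i) ro)%N.
Proof.
rewrite rk_rcons.
set l := rk ro.
rewrite (count_pairs _ _ (fun x => (x < D ro i)%R)).
have fm : forall (P : pred (nat * R)) (s : seq 'I_m),
    [seq p.2 | p <- [seq (rk r', D r' i) | r' <- s] & P p] = [seq D r' i | r' <- s & P (rk r', D r' i)].
  by move=> P s; rewrite filter_map -map_comp.
rewrite !fm /=.
set c := fun j => size (undup [seq D r' i | r' <- enum 'I_m & rk r' == j]).
rewrite -/(c _).
have -> : \sum_(0 <= j < l) size (undup [seq p.2 | p <- [seq (rk r', D r' i) | r' <- enum 'I_m] & p.1 == j])
   = \sum_(0 <= j < l) ((c j).-1 + 1).
  apply: eq_big_nat => j /andP[_ jl]; rewrite fm addn1 prednK //.
  have [r' e] := rk_dense jl.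
  have : D r' i \in undup [seq D r' i | r' <- enum 'I_m & rk r' == j].
    by rewrite mem_undup; apply/mapP; exists r'; rewrite // mem_filter e eqxx mem_enum.
  by rewrite /c; case: (undup _).
rewrite big_split /= sum_nat_const_nat subn0 muln1.
have hX : (size (undup [seq D r' i | r' <- enum 'I_m & (rk r' == l) && (D r' i <= D ro i)%R])).-1
   = size (undup [seq D r' i | r' <- enum 'I_m & (rk r' == l) && (D r' i < D ro i)%R]).
  rewrite (@sz_undup_eqi _ _ (D ro i :: [seq D r' i | r' <- enum 'I_m & (rk r' == l) && (D r' i < D ro i)%R])).
    rewrite sz_undup_cons ifF //.
    by apply/negP => /mapP[y]; rewrite mem_filter => /andP[/andP[_ h] _] e; move: h; rewrite e ltxx.
  move=> x; rewrite inE; apply/mapP/idP => [[y]|].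
    rewrite mem_filter => /andP[/andP[yl hy] ye] ->.
    rewrite le_eqVlt in hy; case/orP: hy => [/eqP ->|hy]; first by rewrite eqxx.
    by apply/orP; right; apply/mapP; exists y; rewrite // mem_filter yl hy.
  case/orP => [/eqP ->|/mapP[y]]; first by exists ro; rewrite // mem_filter eqxx lexx mem_enum.
  by rewrite mem_filter => /andP[/andP[yl hy] ye] ->; exists y; rewrite // mem_filter yl ltW.
by rewrite hX (addnC l).
Qed.
End Fin.

Section Fin2.
Variables (R : realType) (m n : nat) (D : 'M[R]_(m, n)) (Q : 'M[int]_(m, n)).

Lemma ord_mem (T : eqType) (P : pred nat) (f : nat -> T) (i : 'I_n) :
  perm_eq [seq Qat Q k i | k <- iota 0 m] (iota 0 m) ->
  map f (filter P [seq Qat Q k i | k <- iota 0 m]) =i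
  [seq f (val r) | r <- enum 'I_m & P (val r)].
Proof.
move=> Hp x; apply/mapP/mapP => [][y].
  rewrite mem_filter (perm_mem Hp) mem_iota add0n => /andP[Py ym] ->.
  by exists (Ordinal ym); rewrite // mem_filter Py mem_enum.
rewrite mem_filter => /andP[Py _] ->; exists (val y) => //.
by rewrite mem_filter Py (perm_mem Hp) mem_iota add0n ltn_ord.
Qed.

Lemma Dat_val (r : 'I_m) i : Dat D (val r) i = D r i.
Proof. by rewrite /Dat valK. Qed.

Lemma Dat_nat (r : 'I_m) i : Dat D (nat_of_ord r) i = D r i.
Proof. exact: Dat_val. Qed.

Lemma refine_correct a i : sorting_matrix D Q ->
  QuickLexSortRefine D Q i (ranking_vector D a) = ranking_vector D (rcons a i).
Proof.
move=> /(_ i) [Hperm Hsort].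
have Hp : perm_eq [seq Qat Q k i | k <- iota 0 m] (iota 0 m).
  have -> : [seq Qat Q k i | k <- iota 0 m] = map absz [seq Q k i | k <- enum 'I_m].
    by rewrite -val_enum_ord -!map_comp; apply: eq_map => k /=; rewrite /Qat valK.
  have E : iota 0 m = map absz [seq (k%:Z)%R | k <- iota 0 m].
    by rewrite -map_comp map_id.
  rewrite [X in perm_eq _ X]E; exact: perm_map.
apply: (@eq_from_nth _ 0%N); first by rewrite size_refine size_rank.
rewrite size_refine => r rm.
have -> : r = val (Ordinal rm) by [].
set ro := Ordinal rm.
rewrite refine_nth // ?nth_rank ?rk_bound //.
rewrite -final_eq.
congr (_ + _ + _)%N.
  apply: eq_bigr => j _; congr (_.-1).
  rewrite /cls (sz_undup_eqi (@ord_mem _ (fun r => nth 0%N (ranking_vector D a) r == j) (fun r => Dat D r i) i Hp)).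
  congr (size (undup _)).
  rewrite (eq_filter (a2 := fun r' => rkf D a r' == j)) => [|r' /=]; last by rewrite nth_rank.
  by apply: eq_map => r'; rewrite Dat_val.
congr (_.-1).
rewrite /cls -filter_predI.
rewrite (sz_undup_eqi (@ord_mem _ _ (fun r => Dat D r i) i Hp)).
congr (size (undup _)).
rewrite (eq_filter (a2 := fun r' => (rkf D a r' == rkf D a ro) && (D r' i <= D ro i)%R)) => [|r' /=]; last first.
  by rewrite /predI /= nth_rank (Dat_nat r') (Dat_nat ro) andbC.
by apply: eq_map => r'; rewrite Dat_val.
Qed.
End Fin2.
Unset Implicit Arguments.

Theorem mainTheorem3 (R : realType) (m n : nat)
    (D : 'M[R]_(m, n)) (Q : 'M[int]_(m, n)) (a : seq 'I_n) :
  sorting_matrix D Q ->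
  QuickLexSort D Q a = ranking_vector D a.
Proof.
move=> HS; elim/last_ind: a => [|a i IH].
  rewrite /QuickLexSort /=; apply: (@eq_from_nth _ 0%N).
    by rewrite size_nseq size_rank.
  rewrite size_nseq => r rm; rewrite nth_nseq rm.
  have -> : r = val (Ordinal rm) by [].
  rewrite nth_rank /rkf /rankK.
  by rewrite (eq_filter (a2 := pred0)) // filter_pred0.
rewrite /QuickLexSort foldl_rcons -/(QuickLexSort D Q a) IH.
exact: refine_correct.
Qed.
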